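(* The sequence $\Delta(\mathbf{t}_{3/2})$ is $3/2$-automatic.
   Context: Base-$3/2$ expansions: $\langle 0\rangle_{3/2}$ is the empty word, and for $n\ge 1$, writing $2n=3m+d$ with integers $m\ge0$, $d\in\{0,1,2\}$, set $\langle n\rangle_{3/2}=\langle m\rangle_{3/2}\,d$ (a word over $\{0,1,2\}$, most significant digit first). The Thue--Morse word in base $3/2$ is $\mathbf{t}_{3/2}=(t_n)_{n\ge0}$ with $t_n$ the digit sum of $\langle n\rangle_{3/2}$ modulo $2$. For a binary sequence $\mathbf{x}=(x_n)$, $\Delta(\mathbf{x})=(x_{n+1}-x_n\bmod 2)_{n\ge0}$. A sequence $(y_n)_{n\ge0}$ is $3/2$-automatic if there is a deterministic finite automaton with output, over the input alphabet $\{0,1,2\}$, such that for every $n\ge0$, $y_n$ is the output of the state reached after reading $\langle n\rangle_{3/2}$ from the initial state. *)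

(* Defs.v *)
From mathcomp Require Import all_boot.
Set Implicit Arguments. Unset Strict Implicit. Unset Printing Implicit Defensive.

Definition digit := 'I_3.

(* Base-3/2 expansion, most significant digit first, computed with fuel.
   For n >= 1, 2n = 3m + d with m = (2n) %/ 3, d = (2n) %% 3, and m < n,
   so fuel n suffices. *)
Fixpoint exp32_aux (fuel n : nat) : seq digit :=
  match fuel with
  | 0 => [::]
  | fuel'.+1 =>
      if n is 0 then [::]
      else rcons (exp32_aux fuel' ((2 * n) %/ 3)) (inord ((2 * n) %% 3))
  end.

Definition exp32 (n : nat) : seq digit := exp32_aux n n.

Definition tm32 (n : nat) : bool := odd (sumn (map (@nat_of_ord 3) (exp32 n))).

Definition Delta (x : nat -> bool) (n : nat) : bool := x n.+1 (+) x n.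

Record dfao := DFAO {
  dfao_state : finType;
  dfao_init : dfao_state;
  dfao_trans : dfao_state -> digit -> dfao_state;
  dfao_out : dfao_state -> bool }.

Definition dfao_run (A : dfao) (w : seq digit) : @dfao_state A :=
  foldl (@dfao_trans A) (@dfao_init A) w.

Definition auto32 (y : nat -> bool) : Prop :=
  exists A : dfao, forall n, y n = @dfao_out A (dfao_run A (exp32 n)).

(* Main.v *)
Require Import Defs.
From mathcomp Require Import all_boot.
From mathcomp Require Import zify.

Lemma aux_fuel f g n : n <= f -> n <= g -> exp32_aux f n = exp32_aux g n.
Proof.
elim: f g n => [|f IH] [|g] [|n] //= Hf Hg.
congr rcons; apply: IH; lia.
Qed.

Lemma exp32S n : 0 < n ->
  exp32 n = rcons (exp32 ((2 * n) %/ 3)) (inord ((2 * n) %% 3)).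
Proof.
case: n => [|n] // _; rewrite /exp32 /=; congr rcons; apply: aux_fuel; lia.
Qed.

Lemma tm32S n : 0 < n -> tm32 n = tm32 ((2 * n) %/ 3) (+) odd ((2 * n) %% 3).
Proof.
move=> Hn; rewrite /tm32 exp32S // map_rcons -cats1 sumn_cat /= inordK;
  last by rewrite ltn_mod.
by rewrite addn0 oddD.
Qed.

Definition A32 : dfao := @DFAO bool false
  (fun s (d : digit) => if nat_of_ord d == 0 then false else ~~ s) id.

Theorem lemma9 : auto32 (Delta tm32).
Proof.
exists A32 => n; elim/ltn_ind: n => n IH.
case: n IH => [|n] IH.
  by rewrite /Delta (@tm32S 1).
have IHm := IH ((2 * n.+1) %/ 3) ltac:(lia).
rewrite /dfao_run /= in IHm.
rewrite /dfao_run exp32S // -cats1 foldl_cat /= inordK ?ltn_mod //.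
rewrite -IHm.
rewrite /Delta (@tm32S n.+2) // (@tm32S n.+1) //.
set m := (2 * n.+1) %/ 3.
have Hd : (2 * n.+1) %% 3 < 3 by rewrite ltn_mod.
have := divn_eq (2 * n.+1) 3; rewrite -/m.
case Ed: ((2 * n.+1) %% 3) Hd => [|[|[|d]]] // _ E.
- have -> : (2 * n.+2) %/ 3 = m by lia.
  have -> : (2 * n.+2) %% 3 = 2 by lia.
  by case: (tm32 m).
- have -> : (2 * n.+2) %/ 3 = m.+1 by lia.
  have -> : (2 * n.+2) %% 3 = 0 by lia.
  rewrite /= /Delta. by case: (tm32 m); case: (tm32 m.+1).
- have -> : (2 * n.+2) %/ 3 = m.+1 by lia.
  have -> : (2 * n.+2) %% 3 = 1 by lia.
  rewrite /= /Delta. by case: (tm32 m); case: (tm32 m.+1).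
Qed.
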